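(* Let $h$ and $k$ be positive integers. If $a$ and $\ell$ are positive integers such that $k = a\ell$, then the sumset size set $\mathcal{R}_{\mathbf{Z}}(h,k)$ contains the arithmetic progression \[ \left\{ (\ell-1)hb + (a-1)h + 1 : b \in [a,(a-1)h+1] \right\}. \]
   Context: For a positive integer $h$ and a finite set $A$ of integers, $hA$ denotes the set of all sums $a_1+\cdots+a_h$ with $a_1,\ldots,a_h \in A$ (not necessarily distinct). The sumset size set is $\mathcal{R}_{\mathbf{Z}}(h,k) = \{ |hA| : A \subseteq \mathbf{Z},\ |A| = k\}$. For real $u,v$, $[u,v] = \{n \in \mathbf{Z} : u \le n \le v\}$. *)

(* Defs.v *)
From mathcomp Require Import all_boot all_order all_algebra.
Set Implicit Arguments. Unset Strict Implicit. Unset Printing Implicit Defensive.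
Import GRing.Theory Num.Theory.
Local Open Scope ring_scope.

Fixpoint hsums (h : nat) (A : seq int) : seq int :=
  match h with
  | 0%N => [:: 0]
  | h'.+1 => [seq x + y | x <- A, y <- hsums h' A]
  end.

Definition hsumset (h : nat) (A : seq int) : seq int := undup (hsums h A).

(* n \in R_Z(h,k): there is a set A of k integers with |hA| = n. *)
Definition in_R_Z (h k n : nat) : Prop :=
  exists A : seq int, [/\ uniq A, size A = k & size (hsumset h A) = n].

(* Main.v *)
Require Import Defs.
From mathcomp Require Import all_boot all_order all_algebra.
From mathcomp Require Import zify.

Definition Aset (a l b : nat) : seq int :=
  [seq Posz (i + b * j)%N | i <- iota 0 a, j <- iota 0 l].

Lemma hsums_mem (a l b m : nat) (x : int) : (0 < a)%N -> (0 < l)%N ->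
  (x \in hsums m (Aset a l b)) <->
  exists u v, [/\ (u <= m * (a - 1))%N, (v <= m * (l - 1))%N & x = Posz (u + b * v)%N].
Proof.
move=> a0 l0; elim: m x => [|m IH] x /=.
  rewrite inE; split; first by move/eqP ->; exists 0%N, 0%N; rewrite !muln0.
  by case=> u [v [hu hv ->]]; move: hu hv; rewrite !mul0n !leqn0 => /eqP -> /eqP ->; rewrite muln0.
split.
  case/allpairsP => [[y z] [/= hy hz ->]].
  case/allpairsP: hy => [[i j] [/= hi hj ->]].
  case/IH: hz => [u [v [hu hv ->]]].
  move: hi hj; rewrite !mem_iota /= => hi hj.
  exists (i + u)%N, (j + v)%N; split; [lia| lia| lia].
case=> u [v [hu hv ->]].
pose i := minn u (a - 1); pose j := minn v (l - 1).
apply/allpairsP; exists (Posz (i + b * j)%N, Posz ((u - i) + b * (v - j))%N); split => /=.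
- apply/allpairsP; exists (i, j); split => //=; rewrite mem_iota add0n leq0n /= /i /j.
    + by apply: leq_ltn_trans (geq_minr _ _) _; lia.
    + by apply: leq_ltn_trans (geq_minr _ _) _; lia.
- have hi : (i <= u)%N by exact: geq_minl.
  have hj : (j <= v)%N by exact: geq_minl.
  have hi' : (u - i <= m * (a - 1))%N.
    rewrite /i; case: (leqP u (a - 1)) => H; rewrite ?subnn //; lia.
  have hj' : (v - j <= m * (l - 1))%N.
    rewrite /j; case: (leqP v (l - 1)) => H; rewrite ?subnn //; lia.
  by apply/IH; exists (u - i)%N, (v - j)%N; split.
- have hi : (i <= u)%N by exact: geq_minl.
  have hj : (j <= v)%N by exact: geq_minl.
  clearbody i j; rewrite -PoszD; congr Posz; rewrite mulnBr; have := leq_mul (leqnn b) hj; lia.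
Qed.

Theorem mainTheorem3 (h k a l : nat) :
  (0 < h)%N -> (0 < k)%N -> (0 < a)%N -> (0 < l)%N -> k = (a * l)%N ->
  forall b : nat, (a <= b <= (a - 1) * h + 1)%N ->
    in_R_Z h k ((l - 1) * h * b + (a - 1) * h + 1)%N.
Proof.
move=> h0 k0 a0 l0 -> b /andP [ab bu].
exists (Aset a l b); split.
- rewrite /Aset; apply: allpairs_uniq; try exact: iota_uniq.
  move=> [i j] [i' j'] /allpairsP [[x y] [/= hx hy [-> ->]]]
    /allpairsP [[x' y'] [/= hx' hy' [-> ->]]] /= [].
  move: hx hy hx' hy'; rewrite !mem_iota => hx hy hx' hy' E.
  have Ey : y = y'.
    have : ((x + b * y) %/ b = (x' + b * y') %/ b)%N by rewrite E.
    have D : forall p q, (p < b)%N -> ((p + b * q) %/ b = q)%N.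
      move=> p q pb; rewrite addnC mulnC divnMDl ?divn_small ?addn0 //; lia.
    rewrite !D //; lia.
  by subst y'; congr pair; lia.
- by rewrite /Aset size_allpairs !size_iota.
- set N := ((l - 1) * h * b + (a - 1) * h)%N.
  have P : perm_eq (hsumset h (Aset a l b)) (map Posz (iota 0 N.+1)).
    apply: uniq_perm; first exact: undup_uniq.
      by rewrite map_inj_uniq ?iota_uniq // => x y [].
    move=> x; rewrite mem_undup; apply/idP/idP.
      case/(hsums_mem _ _ _ _ _ a0 l0) => u [v [hu hv ->]].
      apply/mapP; exists (u + b * v)%N => //; rewrite mem_iota /N; nia.
    case/mapP => n; rewrite mem_iota => /andP [_ hn] ->.
    apply/(hsums_mem _ _ _ _ _ a0 l0).
    have b0 : (0 < b)%N by lia.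
    case: (leqP (n %/ b) (h * (l - 1))) => hq.
      exists (n %% b), (n %/ b); split => //.
        have := ltn_pmod n b0; lia.
      by rewrite mulnC addnC -divn_eq.
    exists (n - b * (h * (l - 1)))%N, (h * (l - 1))%N; split => //.
      have : (b * (h * (l - 1)) <= n)%N.
        apply: leq_trans (leq_trunc_div n b).
        rewrite mulnC leq_mul2r; lia.
      rewrite /N in hn; nia.
    have : (b * (h * (l - 1)) <= n)%N.
      apply: leq_trans (leq_trunc_div n b).
      rewrite mulnC leq_mul2r; lia.
    lia.
  by rewrite (perm_size P) size_map size_iota /N; lia.
Qed.
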